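(* Let $V$ be a finite family of L-frames all anchored at $D$ from above, $G$ its intersection graph, $\mathcal B,\mathcal R\subseteq V$ disjoint dominating sets of $G$, and $H=(\mathcal B\cup\mathcal R,E')$ the graph defined in the context. Then for every $u\in V$ there exist $b\in\mathcal B$ and $r\in\mathcal R$ with $(b,r)\in E'$ such that both $b$ and $r$ intersect $u$. Consequently, for every $\mathcal B'\subseteq\mathcal B$, the set $(\mathcal B\setminus\mathcal B')\cup N_H(\mathcal B')$ is a dominating set of $G$, where $N_H(\mathcal B')$ is the set of neighbours of $\mathcal B'$ in $H$.
   Context: Fix a line $D$ of slope $-1$. An L-frame is the union of a closed horizontal segment and a closed vertical segment sharing an endpoint, its corner $\mathrm{cor}(\cdot)$; it is anchored at $D$ from above if its corner is on $D$, its horizontal segment goes right and its vertical segment goes up from the corner. Two L-frames are adjacent in $G$ iff they intersect; a dominating set is a set $S$ such that every vertex outside $S$ intersects some member of $S$. The graph $H$: for each $u\in V$, among all pairs $(b,r)\in\mathcal B\times\mathcal R$ such that both $b$ and $r$ intersect $u$ (an L-frame intersects itself), choose one pair minimizing the Euclidean distance between $\mathrm{cor}(b)$ and $\mathrm{cor}(r)$, and put it in $E'$. *)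

(* Defs.v *)
From HB Require Import structures.
From mathcomp Require Import all_boot all_order all_algebra.
Set Implicit Arguments. Unset Strict Implicit. Unset Printing Implicit Defensive.
Import Order.TTheory GRing.Theory Num.Theory.
Local Open Scope ring_scope.

(* An L-frame: corner (cx, cy); horizontal segment from the corner to (hx, cy);
   vertical segment from the corner to (cx, vy).  (Direction encoded by signs.) *)
Record Lframe (R : rcfType) := mkLframe { cx : R; cy : R; hx : R; vy : R }.

Definition cor (R : rcfType) (f : Lframe R) : R * R := (cx f, cy f).

Definition between (R : rcfType) (a b t : R) : Prop :=
  (Num.min a b <= t) /\ (t <= Num.max a b).

Definition onL (R : rcfType) (f : Lframe R) (p : R * R) : Prop :=
  (p.2 = cy f /\ between (cx f) (hx f) p.1) \/
  (p.1 = cx f /\ between (cy f) (vy f) p.2).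

Definition Lintersect (R : rcfType) (f g : Lframe R) : Prop :=
  exists p : R * R, onL f p /\ onL g p.

(* The line D := { (x, y) | x + y = c } has slope -1.  f is anchored at D from
   above: corner on D, horizontal segment goes right, vertical goes up
   (segments are non-degenerate). *)
Definition anchored_above (R : rcfType) (c : R) (f : Lframe R) : Prop :=
  cx f + cy f = c /\ cx f < hx f /\ cy f < vy f.

Definition edist (R : rcfType) (p q : R * R) : R :=
  Num.sqrt ((p.1 - q.1) ^+ 2 + (p.2 - q.2) ^+ 2).

Definition adjG (R : rcfType) (I : finType) (fr : I -> Lframe R) (u v : I) : Prop :=
  Lintersect (fr u) (fr v).

Definition dominating (R : rcfType) (I : finType) (fr : I -> Lframe R)
  (S : {set I}) : Prop :=
  forall u : I, u \notin S -> exists2 s, s \in S & adjG fr u s.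

(* sel is a valid choice for the construction of H: for each u for which some
   pair (b, r) in B x R with b, r intersecting u exists, sel u is such a pair
   minimizing the Euclidean distance between corners. *)
Definition valid_selection (R : rcfType) (I : finType) (fr : I -> Lframe R)
  (B Rd : {set I}) (sel : I -> I * I) : Prop :=
  forall u : I,
    (exists b r, [/\ b \in B, r \in Rd, Lintersect (fr b) (fr u) &
                    Lintersect (fr r) (fr u)]) ->
    [/\ (sel u).1 \in B, (sel u).2 \in Rd,
        Lintersect (fr (sel u).1) (fr u), Lintersect (fr (sel u).2) (fr u) &
        forall b r, b \in B -> r \in Rd -> Lintersect (fr b) (fr u) ->
          Lintersect (fr r) (fr u) ->
          edist (cor (fr (sel u).1)) (cor (fr (sel u).2))
            <= edist (cor (fr b)) (cor (fr r))].

Definition Eprime (I : finType) (sel : I -> I * I) : {set I * I} :=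
  [set sel u | u : I].

Definition NH (I : finType) (E : {set I * I}) (X : {set I}) : {set I} :=
  [set v | [exists x in X, ((x, v) \in E) || ((v, x) \in E)]].

(* Main.v *)
Require Import Defs.
From HB Require Import structures.
From mathcomp Require Import all_boot all_order all_algebra.
Import Order.TTheory GRing.Theory Num.Theory.
Local Open Scope ring_scope.

Lemma Lint_refl (R : rcfType) (f : Lframe R) : Lintersect f f.
Proof.
have H : onL f (cx f, cy f).
  left; split => //; split; by rewrite /= ?ge_min ?le_max lexx.
by exists (cx f, cy f).
Qed.

Lemma Lint_sym (R : rcfType) (f g : Lframe R) : Lintersect f g -> Lintersect g f.
Proof. by case=> p [h1 h2]; exists p. Qed.

Theorem mainTheorem5 (R : rcfType) (c : R) (I : finType) (fr : I -> Lframe R)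
  (B Rd : {set I}) (sel : I -> I * I) :
  (forall i, anchored_above c (fr i)) ->
  [disjoint B & Rd] ->
  dominating fr B -> dominating fr Rd ->
  valid_selection fr B Rd sel ->
  (forall u : I, exists b r,
      [/\ b \in B, r \in Rd, (b, r) \in Eprime sel,
          Lintersect (fr b) (fr u) & Lintersect (fr r) (fr u)]) /\
  (forall B' : {set I}, B' \subset B ->
      dominating fr ((B :\: B') :|: NH (Eprime sel) B')).
Proof.
move=> _ _ domB domR vs.
have ex : forall u, exists b r, [/\ b \in B, r \in Rd, Lintersect (fr b) (fr u) &
                    Lintersect (fr r) (fr u)].
  move=> u.
  have [b bB hb] : exists2 b, b \in B & Lintersect (fr b) (fr u).
    case: (boolP (u \in B)) => uB; first by exists u => //; apply: Lint_refl.
    by case: (domB u uB) => s sB hs; exists s => //; apply: Lint_sym.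
  have [r rR hr] : exists2 r, r \in Rd & Lintersect (fr r) (fr u).
    case: (boolP (u \in Rd)) => uR; first by exists u => //; apply: Lint_refl.
    by case: (domR u uR) => s sR hs; exists s => //; apply: Lint_sym.
  by exists b, r.
have P1 : forall u : I, [/\ (sel u).1 \in B, (sel u).2 \in Rd, (sel u) \in Eprime sel,
          Lintersect (fr (sel u).1) (fr u) & Lintersect (fr (sel u).2) (fr u)].
  move=> u; case: (vs u (ex u)) => h1 h2 h3 h4 _; split => //.
  by apply/imsetP; exists u.
split.
  move=> u; case: (P1 u) => h1 h2 h3 h4 h5; exists (sel u).1, (sel u).2.
  by rewrite -surjective_pairing.
move=> B' sB' u _.
case: (P1 u) => h1 h2 h3 h4 h5.
case: (boolP ((sel u).1 \in B')) => hb.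
  exists (sel u).2; last by apply: Lint_sym.
  apply/setUP; right; rewrite inE; apply/existsP; exists (sel u).1.
  by rewrite hb /= -surjective_pairing h3.
exists (sel u).1; last by apply: Lint_sym.
by apply/setUP; left; rewrite inE hb h1.
Qed.
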